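(* Let $V\simeq\mathbb{R}^d$ be a $d$-dimensional real vector space with dual $V^*$, let $\mathcal{X}\subseteq V$ span $V$, and let $\mathcal{Y}\subseteq\mathbb{R}$. Let $\mathcal{G}$ be a compact group with normalized Haar measure $\lambda$ admitting a linear representation $\rho:\mathcal{G}\to GL(V)$, acting on $\mathcal{X}$ via $\rho$, with dual representation $\rho^*_g=\rho_{g^{-1}}^{\top}$. Let $\mathcal{P}$ be a distribution on $\mathcal{X}\times\mathcal{Y}$ invariant under this action of $\mathcal{G}$, and suppose $\mathbb{E}[y\mid \mathbf{x}]=\langle\mathbf{w}^*,\mathbf{x}\rangle$ for some unique $\mathbf{w}^*$. Let $\ell(\mathbf{w})=\mathbb{E}_{(\mathbf{x},y)\sim\mathcal{P}}[(\langle\mathbf{w},\mathbf{x}\rangle-y)^2]$. Then the (global) minimizer $\mathbf{w}^*$ of $\ell$ satisfies $\rho^*_g\mathbf{w}^*=\mathbf{w}^*$ for $\lambda$-almost all $g\in\mathcal{G}$. In particular, the function $f(\mathbf{x})=\langle\mathbf{w}^*,\mathbf{x}\rangle$ is $\mathcal{G}$-invariant.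
   Context: $\mathcal{P}$ invariant means $(\rho_g\mathbf{x},y)$ has the same distribution as $(\mathbf{x},y)$ for all $g\in\mathcal{G}$. A function $f$ is $\mathcal{G}$-invariant if $f(\rho_g\mathbf{x})=f(\mathbf{x})$ for all $g$ and $\mathbf{x}$. *)

(* Defs.v *)
From HB Require Import structures.
From mathcomp Require Import all_boot all_order all_algebra.
From mathcomp Require Import all_classical all_reals all_analysis.
Set Implicit Arguments. Unset Strict Implicit. Unset Printing Implicit Defensive.
Import Order.TTheory GRing.Theory Num.Theory.
Import numFieldNormedType.Exports.
Local Open Scope classical_set_scope.
Local Open Scope ring_scope.

Definition borel (T : topologicalType) : set (set T) := <<s [set: T], open >>.

Definition compact_group (G : topologicalType) (mul : G -> G -> G)
    (inv : G -> G) (e : G) : Prop :=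
  [/\ (forall a b c, mul a (mul b c) = mul (mul a b) c),
      (forall a, mul e a = a),
      (forall a, mul (inv a) a = e),
      continuous (fun p : G * G => mul p.1 p.2) &
      continuous inv] /\
  hausdorff_space G /\ compact [set: G].

(* A (continuous) linear representation rho : G -> GL(V), V = R^d realised as
   column vectors 'cV[R]_d, rho g acting by v |-> rho g *m v. *)
Definition representation (R : realType) (d : nat) (G : topologicalType)
    (mul : G -> G -> G) (e : G) (rho : G -> 'M[R]_d) : Prop :=
  [/\ (forall g, rho g \in unitmx),
      (forall g h, rho (mul g h) = rho g *m rho h),
      rho e = 1%:M &
      continuous rho].

Definition dual_rep (R : realType) (d : nat) (G : Type) (inv : G -> G)
    (rho : G -> 'M[R]_d) (g : G) : 'M[R]_d := (rho (inv g))^T.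

Definition dualpair (R : realType) (d : nat) (w x : 'cV[R]_d) : R :=
  (w^T *m x) 0 0.

Definition spans (R : realType) (d : nat) (X : set 'cV[R]_d) : Prop :=
  forall v : 'cV[R]_d, exists (n : nat) (c : 'I_n -> R) (u : 'I_n -> 'cV[R]_d),
    (forall i, X (u i)) /\ v = \sum_(i < n) c i *: u i.

(* E[y | x] = <w, x>: the random variable <w, x> (which is sigma(x)-measurable)
   is integrable and has the same integral as y on every event of sigma(x),
   i.e. on every x^{-1}(A) with A a Borel subset of V. *)
Definition cond_exp_linear (dO : measure_display) (O : measurableType dO)
    (R : realType) (P : probability O R) (d : nat)
    (x : O -> 'cV[R]_d) (y : O -> R) (w : 'cV[R]_d) : Prop :=
  P.-integrable [set: O] (fun o => (dualpair w (x o))%:E) /\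
  forall A : set 'cV[R]_d, borel A ->
    (\int[P]_(o in x @^-1` A) (y o)%:E =
     \int[P]_(o in x @^-1` A) (dualpair w (x o))%:E)%E.

(* Main.v *)
Require Import Defs.
From HB Require Import structures.
From mathcomp Require Import all_boot all_order all_algebra.
From mathcomp Require Import all_classical all_reals all_analysis.
From mathcomp Require Import measurable_realfun.
Import Order.TTheory GRing.Theory Num.Theory.
Import numFieldNormedType.Exports.
Local Open Scope classical_set_scope.
Local Open Scope ring_scope.
HB.instance Definition _ (T U : ptopologicalType) := Pointed.on (T*U)%type.

Definition bT (S : ptopologicalType) := g_sigma_algebraType (@open S).

Lemma cont_mfun (S U : ptopologicalType) (f : S -> U) : continuous f ->
  measurable_fun (setT : set (bT S)) (f : bT S -> bT U).
Proof.
move=> cf; apply: (@measurability _ _ (bT S) (bT U) setT f (@open U) erefl).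
move=> _ [B oB <-]; apply: sub_sigma_algebra; rewrite setTI.
exact: (proj1 (continuousP f) cf).
Qed.

Lemma cont_mfunR (R : realType) (S : ptopologicalType) (f : S -> R) : continuous f ->
  measurable_fun (setT : set (bT S)) (f : bT S -> R).
Proof.
move=> cf.
refine (@measurability _ _ (bT S) R setT f (@measurable_realfun.RGenOInfty.G R) _ _).
exact: measurable_realfun.RGenOInfty.measurableE.
move=> _ [B [r ->] <-]; apply: sub_sigma_algebra; rewrite setTI.
apply: (proj1 (continuousP f) cf); exact: rray_open.
Qed.

Arguments cont_mfun {S U f}.
Arguments cont_mfunR {R S f}.

Lemma mx_continuous (R : realType) (S : topologicalType) m n (f : S -> 'M[R]_(m,n)) :
  (forall i j, continuous (fun s => f s i j)) -> continuous f.
Proof.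
move=> h s; apply/(@cvg_mx_entourageP R m n (f @ s) _ (f s)) => A entA.
apply: filter_forall => i; apply: filter_forall => j.
have /cvg_entourageP /(_ A entA) := h i j s.
move=> H; have : (nbhs s) (fun t => (f s i j, f t i j) \in A).
  by apply: (@filterS _ (nbhs s) _ _ _ _ H) => t /= Ht; rewrite inE.
exact.
Qed.

Lemma sum_continuous (R : realType) (S : topologicalType) (I : Type) (r : seq I)
  (F : I -> S -> R) : (forall i, continuous (F i)) ->
  continuous (fun s => \sum_(i <- r) F i s).
Proof.
elim: r => [|a r IH] hF.
  under eq_fun do rewrite big_nil; exact: cst_continuous.
under eq_fun do rewrite big_cons.
move=> s; apply: cvgD; [exact: hF | exact: IH].
Qed.

Lemma mulmx_continuous (R : realType) m n p (N : 'M[R]_(m,n)) :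
  continuous (fun v : 'M[R]_(n,p) => N *m v).
Proof.
apply: mx_continuous => i j.
under eq_fun do rewrite mxE.
apply: sum_continuous => k v.
apply: (@continuousM _ _ (fun=> N i k) (fun v : 'M[R]_(n,p) => v k j)); first exact: cst_continuous.
exact: coord_continuous.
Qed.

Section transfer.
Local Open Scope ereal_scope.
Context d d' (O : measurableType d) (T : measurableType d') (R : realType)
  (P : {measure set O -> \bar R}) (z1 z2 : O -> T).
Hypotheses (m1 : measurable_fun setT z1) (m2 : measurable_fun setT z2)
  (hC : forall C, measurable C -> P (z1 @^-1` C) = P (z2 @^-1` C)).

Lemma ge0_transfer (F : T -> \bar R) : measurable_fun [set: T] F ->
  (forall t, 0 <= F t) ->
  \int[P]_o F (z1 o) = \int[P]_o F (z2 o).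
Proof.
move=> mF F0.
have e1 := ge0_integral_pushforward m1 P measurableT mF (fun t _ => F0 t).
have e2 := ge0_integral_pushforward m2 P measurableT mF (fun t _ => F0 t).
rewrite !preimage_setT in e1 e2.
rewrite -[LHS]e1 -[RHS]e2.
apply: eq_measure_integral => A mA _.
exact: hC.
Qed.

Lemma transfer (F : T -> \bar R) : measurable_fun [set: T] F ->
  \int[P]_o F (z1 o) = \int[P]_o F (z2 o).
Proof.
move=> mF; rewrite integralE [RHS]integralE.
rewrite -[fun o => F (z1 o)]/(F \o z1) -[fun o => F (z2 o)]/(F \o z2).
rewrite (funepos_comp F z1) (funepos_comp F z2) (funeneg_comp F z1) (funeneg_comp F z2).
congr (_ - _).
  exact: (ge0_transfer (F^\+) (measurable_funepos mF) (funepos_ge0 F)).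
exact: (ge0_transfer (F^\-) (measurable_funeneg mF) (funeneg_ge0 F)).
Qed.

Lemma transfer_integrable (F : T -> \bar R) : measurable_fun [set: T] F ->
  P.-integrable setT (F \o z2) -> P.-integrable setT (F \o z1).
Proof.
move=> mF /integrableP [_ h]; apply/integrableP; split.
  exact: measurableT_comp.
have := ge0_transfer (fun t => `|F t|).
move=> ->//.
apply: measurableT_comp => //; exact: abse_measurable.
Qed.
End transfer.


Lemma fst_cont (S U : topologicalType) : continuous (@fst S U).
Proof. by move=> p; apply: cvg_fst. Qed.

Lemma snd_cont (S U : topologicalType) : continuous (@snd S U).
Proof. by move=> p; apply: cvg_snd. Qed.

Lemma dualpair_cont (R : realType) (d : nat) (w : 'cV[R]_d) :
  continuous (dualpair w).
Proof.
move=> v; rewrite /dualpair.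
apply: (@continuous_comp _ _ _ (fun v : 'cV[R]_d => w^T *m v) (fun M : 'M[R]_(1,1) => M 0 0)).
  exact: mulmx_continuous.
exact: coord_continuous.
Qed.

Theorem proposition3p3
  (R : realType) (d : nat)
  (X : set 'cV[R]_d) (Y : set R)
  (G : topologicalType) (mul : G -> G -> G) (inv : G -> G) (e : G)
  (rho : G -> 'M[R]_d)
  (dO : measure_display) (O : measurableType dO) (P : probability O R)
  (x : O -> 'cV[R]_d) (y : O -> R) (wstar : 'cV[R]_d) :
  spans X ->
  compact_group mul inv e ->
  representation mul e rho ->
  (forall g v, X v -> X (rho g *m v)) ->
  (* (x, y) is a random element of X x Y with joint law the distribution P *)
  (forall o, X (x o) /\ Y (y o)) ->
  (forall C : set ('cV[R]_d * R), borel C ->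
     measurable ((fun o => (x o, y o)) @^-1` C)) ->
  (forall A : set 'cV[R]_d, borel A -> measurable (x @^-1` A)) ->
  measurable_fun [set: O] y ->
  P.-integrable [set: O] (fun o => (y o)%:E) ->
  (* invariance of the distribution: (rho_g x, y) has the same law as (x, y) *)
  (forall (g : G) (C : set ('cV[R]_d * R)), borel C ->
     P ((fun o => (rho g *m x o, y o)) @^-1` C) =
     P ((fun o => (x o, y o)) @^-1` C)) ->
  (* E[y | x] = <wstar, x>, with wstar unique *)
  cond_exp_linear P x y wstar ->
  (forall w, cond_exp_linear P x y w -> w = wstar) ->
  (forall g : G, dual_rep inv rho g *m wstar = wstar) /\
  (forall (g : G) (v : 'cV[R]_d), dualpair wstar (rho g *m v) = dualpair wstar v).
Proof.
move=> _ _ [hunit _ _ _] _ _ hxy hx my _ hinv [wint wcond] huniq.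
have dpT : forall (M : 'M[R]_d) (w v : 'cV[R]_d),
    dualpair (M^T *m w) v = dualpair w (M *m v).
  by move=> M w v; rewrite /dualpair trmx_mul trmxK mulmxA.
have key : forall g, (rho g)^T *m wstar = wstar.
  move=> g; apply: huniq.
  set M := rho g.
  have hM : M \in unitmx by exact: hunit.
  set Mi := invmx M.
  pose T := bT ('cV[R]_d * R)%type.
  pose z : O -> T := fun o => (x o, y o).
  pose z' : O -> T := fun o => (M *m x o, y o).
  have mz : measurable_fun setT z.
    by move=> _ C mC; rewrite setTI; exact: hxy.
  have phic : continuous (fun p : ('cV[R]_d * R)%type => (M *m p.1, p.2)).
    move=> p; apply: (@cvg_pair _ _ _ (nbhs p) (nbhs (M *m p.1)) (nbhs p.2)).
      apply: (@continuous_comp _ _ _ fst (fun v : 'cV[R]_d => M *m v)).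
        exact: fst_cont.
      exact: mulmx_continuous.
    exact: snd_cont.
  have mz' : measurable_fun setT z'.
    by move: (measurableT_comp (cont_mfun phic) mz).
  have hC : forall C : set T, measurable C -> P (z' @^-1` C) = P (z @^-1` C).
    by move=> C mC; exact: hinv.
  pose F3 : T -> \bar R := fun p => (dualpair wstar p.1)%:E.
  have cF3 : continuous (fun p : ('cV[R]_d * R)%type => dualpair wstar p.1).
    move=> p; apply: (@continuous_comp _ _ _ fst (dualpair wstar)).
      exact: fst_cont.
    exact: dualpair_cont.
  have mF3 : measurable_fun [set: T] F3.
    exact: (measurableT_comp (@EFin_measurable R setT) (cont_mfunR cF3)).
  split.
    have -> : (fun o => (dualpair (M^T *m wstar) (x o))%:E) = F3 \o z'.
      by apply: funext => o; rewrite /F3 /= dpT.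
    exact: (@transfer_integrable _ _ _ _ _ P z' z mz' mz hC F3 mF3 wint).
  move=> A hA.
  have cMi : continuous (fun p : ('cV[R]_d * R)%type => Mi *m p.1).
    move=> p; apply: (@continuous_comp _ _ _ fst (fun v : 'cV[R]_d => Mi *m v)).
      exact: fst_cont.
    exact: mulmx_continuous.
  pose S : set T := [set p | A (Mi *m p.1)].
  have mS : measurable S.
    have := cont_mfun cMi measurableT A hA; by rewrite setTI.
  pose B : set 'cV[R]_d := [set v | A (Mi *m v)].
  have hB : borel B.
    have := cont_mfun (@mulmx_continuous R d d 1 Mi) measurableT A hA.
    by rewrite setTI.
  have eS : z' @^-1` S = x @^-1` A.
    by apply: funext => o; rewrite /preimage /S /z' /= mulKmx.
  pose F1 : T -> \bar R := (fun p : T => (p.2)%:E) \_ S.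
  pose F2 : T -> \bar R := F3 \_ S.
  have mF1 : measurable_fun [set: T] F1.
    apply/(measurable_restrictT _ mS); apply: measurable_funTS.
    apply: (measurableT_comp (@EFin_measurable R setT)).
    exact: (cont_mfunR (@snd_cont _ _)).
  have mF2 : measurable_fun [set: T] F2.
    by apply/(measurable_restrictT _ mS); apply: measurable_funTS.
  have I1 : (\int[P]_(o in x @^-1` A) (y o)%:E = \int[P]_o F1 (z' o))%E.
    by rewrite integral_mkcond -eS; apply: eq_integral => o _.
  have I2 : (\int[P]_o F1 (z o) = \int[P]_(o in x @^-1` B) (y o)%:E)%E.
    by rewrite [RHS]integral_mkcond; apply: eq_integral => o _.
  have I3 : (\int[P]_o F2 (z o) =
      \int[P]_(o in x @^-1` B) (dualpair wstar (x o))%:E)%E.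
    by rewrite [RHS]integral_mkcond; apply: eq_integral => o _.
  have I4 : (\int[P]_o F2 (z' o) =
      \int[P]_(o in x @^-1` A) (dualpair (M^T *m wstar) (x o))%:E)%E.
    rewrite [RHS]integral_mkcond -eS; apply: eq_integral => o _.
    by rewrite /F2 /F3 /patch /= dpT.
  rewrite I1 (@transfer _ _ _ _ _ P z' z mz' mz hC F1 mF1) I2 wcond //.
  by rewrite -I3 -(@transfer _ _ _ _ _ P z' z mz' mz hC F2 mF2) I4.
split.
  by move=> g; rewrite /dual_rep; exact: key.
by move=> g v; rewrite -[in RHS](key g) dpT.
Qed.
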